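(* Let $c^{(k)}$ be an admissible control, $\rho^{(k)}$ the corresponding solution of the master equation and $\chi^{(k)}$ the solution of the adjoint system with control $c^{(k)}$. Let $c^{(k+1)}=(u^{(k+1)},n_1^{(k+1)},n_2^{(k+1)})$ be an admissible control and $\rho^{(k+1)}$ the solution of the master equation with control $c^{(k+1)}$ such that for every $t\in[0,T]$: $u^{(k+1)}(t)\in\arg\max_{|u|\le\mu}\mathcal K^u(\chi^{(k)}(t),\rho^{(k+1)}(t))\,u$ and $n_j^{(k+1)}(t)\in\arg\max_{n_j\in[0,n_{\max}]}\mathcal K^{n_j}(\chi^{(k)}(t),\rho^{(k+1)}(t))\,n_j$, $j=1,2$ (i.e. $u^{(k+1)}(t)=\pm\mu$ according to the sign of $\mathcal K^u$, $n_j^{(k+1)}(t)=0$ or $n_{\max}$ according to the sign of $\mathcal K^{n_j}$, arbitrary in the admissible range where the switching function vanishes). Then $\langle\mathcal K^c(\chi^{(k)}(t),\rho^{(k+1)}(t)),c^{(k+1)}(t)-c^{(k)}(t)\rangle\ge0$ for all $t\in[0,T]$ and $J_1(c^{(k+1)})\ge J_1(c^{(k)})$. Moreover $J_1(c^{(k+1)})>J_1(c^{(k)})$ if at least one of the sets $\{t: u^{(k+1)}(t)\ne u^{(k)}(t),\ \mathcal K^u(\chi^{(k)}(t),\rho^{(k+1)}(t))\ne0\}$, $\{t: n_j^{(k+1)}(t)\ne n_j^{(k)}(t),\ \mathcal K^{n_j}(\chi^{(k)}(t),\rho^{(k+1)}(t))\ne0\}$ ($j=1,2$) has positive Lebesgue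 measure.
   Context: Let $\sigma_x,\sigma_y,\sigma_z$ be the Pauli matrices, $\mathbb I_2,\mathbb I_4$ identity matrices, $\sigma^+=\begin{pmatrix}0&0\\1&0\end{pmatrix}$, $\sigma^-=\begin{pmatrix}0&1\\0&0\end{pmatrix}$, $\sigma_1^\pm=\sigma^\pm\otimes\mathbb I_2$, $\sigma_2^\pm=\mathbb I_2\otimes\sigma^\pm$, $W_1=\sigma_z\otimes\mathbb I_2$, $W_2=\mathbb I_2\otimes\sigma_z$. Fix parameters $\varepsilon,\omega_j,\Lambda_j,\Omega_j>0$ ($j=1,2$), $H_0=\frac{\omega_1}{2}W_1+\frac{\omega_2}{2}W_2$, and a Hermitian $4\times4$ matrix $V$ (in the paper $V=Q_1\otimes\mathbb I_2+\mathbb I_2\otimes Q_2$ or $V=Q_1\otimes Q_2$ with $Q_j=\sin\theta_j\cos\varphi_j\sigma_x+\sin\theta_j\sin\varphi_j\sigma_y+\cos\theta_j\sigma_z$). For $c=(u,n_1,n_2)\in\mathbb R^3$ let $H_c=H_0+\varepsilon\sum_{j=1}^2\Lambda_j n_jW_j+uV$ and $$\mathcal L^D_n(\rho)=\sum_{j=1}^2\Big[\Omega_j(n_j+1)\big(2\sigma_j^-\rho\sigma_j^+-\{\sigma_j^+\sigma_j^-,\rho\}\big)+\Omega_jn_j\big(2\sigma_j^+\rho\sigma_j^--\{\sigma_j^-\sigma_j^+,\rho\}\big)\Big],$$ $$\mathcal L^{D,\dagger}_n(\chi)=\sum_{j=1}^2\Big[\Omega_j(n_j+1)\big(2\sigma_j^+\chi\sigma_j^--\{\sigma_j^+\sigma_j^-,\chi\}\big)+\Omega_jn_j\big(2\sigma_j^-\chi\sigma_j^+-\{\sigma_j^-\sigma_j^+,\chi\}\big)\Big],$$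 where $\{A,B\}=AB+BA$, $[A,B]=AB-BA$. Fix $T>0$, $\mu,n_{\max}>0$, $Q=[-\mu,\mu]\times[0,n_{\max}]^2$; admissible controls are piecewise continuous $c=(u,n_1,n_2):[0,T]\to Q$. Fix density matrices $\rho_0,\rho_{\rm target}$ ($4\times 4$, positive semidefinite, trace one). The master equation is $\dot\rho(t)=-i[H_{c(t)},\rho(t)]+\varepsilon\mathcal L^D_{n(t)}(\rho(t))$, $\rho(0)=\rho_0$; the adjoint system is $\dot\chi(t)=-i[H_{c(t)},\chi(t)]-\varepsilon\mathcal L^{D,\dagger}_{n(t)}(\chi(t))$, $\chi(T)=\rho_{\rm target}$ (solved backward). For matrices, $\langle A,B\rangle={\rm Tr}(A^\dagger B)$. The objective is $J_1(c)={\rm Tr}(\rho(T)\rho_{\rm target})$ where $\rho$ solves the master equation with control $c$. The switching functions $\mathcal K^c=(\mathcal K^u,\mathcal K^{n_1},\mathcal K^{n_2})$ are the coefficients of $u,n_1,n_2$ in $\langle\chi,-i[H_c,\rho]+\varepsilon\mathcal L^D_n(\rho)\rangle$: $\mathcal K^u(\chi,\rho)=\langle\chi,-i[V,\rho]\rangle$, $\mathcal K^{n_j}(\chi,\rho)=\big\langle\chi,-i\varepsilon\Lambda_j[W_j,\rho]+\varepsilon\Omega_j\big(2\sigma_j^-\rho\sigma_j^++2\sigma_j^+\rho\sigma_j^--2\rho\big)\big\rangle$, $j=1,2$ (real for Hermitian $\chi,\rho$). *)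

(* Defs.v *)
From HB Require Import structures.
From mathcomp Require Import all_boot all_order all_algebra.
From mathcomp Require Import all_classical all_reals all_analysis.
From mathcomp Require Import complex.

Set Implicit Arguments.
Unset Strict Implicit.
Unset Printing Implicit Defensive.

Import Order.TTheory GRing.Theory Num.Theory.
Import numFieldNormedType.Exports.
Local Open Scope classical_set_scope.
Local Open Scope ring_scope.
Local Open Scope complex_scope.

Section QuantumControl.
Variable R : realType.
Local Notation C := R[i].
Local Notation M2 := 'M[C]_2.
Local Notation M4 := 'M[C]_4.

Definition sigx : M2 := \matrix_(i < 2, j < 2) (if i == j then 0 else 1).
Definition sigy : M2 := \matrix_(i < 2, j < 2)
  (if i == j then 0 else if (i == 0 :> nat) then - 'i else 'i).
Definition sigz : M2 := \matrix_(i < 2, j < 2)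
  (if i == j then (if (i == 0 :> nat) then 1 else -1) else 0).
Definition sigp : M2 := \matrix_(i < 2, j < 2)
  (if ((i == 1 :> nat) && (j == 0 :> nat)) then 1 else 0).
Definition sigm : M2 := \matrix_(i < 2, j < 2)
  (if ((i == 0 :> nat) && (j == 1 :> nat)) then 1 else 0).
Definition I2 : M2 := 1%:M.

(* Kronecker product of 2x2 matrices, standard ordering:
   (A (x) B)_{2 i1 + i2, 2 j1 + j2} = A_{i1 j1} B_{i2 j2}. *)
Definition kron (A B : M2) : M4 := \matrix_(i < 4, j < 4)
  (A (inord (i %/ 2)) (inord (j %/ 2)) * B (inord (i %% 2)) (inord (j %% 2))).

Definition sig1p : M4 := kron sigp I2.
Definition sig1m : M4 := kron sigm I2.
Definition sig2p : M4 := kron I2 sigp.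
Definition sig2m : M4 := kron I2 sigm.
Definition W1 : M4 := kron sigz I2.
Definition W2 : M4 := kron I2 sigz.

Definition dag (A : M4) : M4 := map_mx Num.conj (A^T).
Definition comm (A B : M4) : M4 := A *m B - B *m A.
Definition acomm (A B : M4) : M4 := A *m B + B *m A.
Definition ip (A B : M4) : C := \tr (dag A *m B).

Definition hermitian (A : M4) : Prop := dag A = A.
(* density matrix: positive semidefinite (x^* A x >= 0, i.e. real and
   nonnegative, for all x) and trace one *)
Definition dag_cv (x : 'cV[C]_4) : 'rV[C]_4 := map_mx Num.conj (x^T).
Definition density (A : M4) : Prop :=
  (forall x : 'cV[C]_4, 0 <= ((dag_cv x) *m A *m x) 0 0) /\ \tr A = 1.

Record params := Params {
  eps : R; om1 : R; om2 : R; La1 : R; La2 : R; Om1 : R; Om2 : R;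
  Vop : M4 }.

Definition params_ok (P : params) : Prop :=
  [/\ 0 < eps P, 0 < om1 P, 0 < om2 P, 0 < La1 P & 0 < La2 P] /\
  [/\ 0 < Om1 P, 0 < Om2 P & hermitian (Vop P)].

Definition H0 (P : params) : M4 :=
  ((om1 P / 2)%:C) *: W1 + ((om2 P / 2)%:C) *: W2.

Definition Hc (P : params) (u n1 n2 : R) : M4 :=
  H0 P + ((eps P * La1 P * n1)%:C) *: W1 + ((eps P * La2 P * n2)%:C) *: W2
       + (u%:C) *: Vop P.

Definition LD (P : params) (n1 n2 : R) (rho : M4) : M4 :=
  ((Om1 P * (n1 + 1))%:C) *: (2%:R *: (sig1m *m rho *m sig1p)
                               - acomm (sig1p *m sig1m) rho)
+ ((Om1 P * n1)%:C) *: (2%:R *: (sig1p *m rho *m sig1m)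
                               - acomm (sig1m *m sig1p) rho)
+ ((Om2 P * (n2 + 1))%:C) *: (2%:R *: (sig2m *m rho *m sig2p)
                               - acomm (sig2p *m sig2m) rho)
+ ((Om2 P * n2)%:C) *: (2%:R *: (sig2p *m rho *m sig2m)
                               - acomm (sig2m *m sig2p) rho).

Definition LDadj (P : params) (n1 n2 : R) (chi : M4) : M4 :=
  ((Om1 P * (n1 + 1))%:C) *: (2%:R *: (sig1p *m chi *m sig1m)
                               - acomm (sig1p *m sig1m) chi)
+ ((Om1 P * n1)%:C) *: (2%:R *: (sig1m *m chi *m sig1p)
                               - acomm (sig1m *m sig1p) chi)
+ ((Om2 P * (n2 + 1))%:C) *: (2%:R *: (sig2p *m chi *m sig2m)
                               - acomm (sig2p *m sig2m) chi)
+ ((Om2 P * n2)%:C) *: (2%:R *: (sig2m *m chi *m sig2p)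
                               - acomm (sig2m *m sig2p) chi).

Definition master_rhs (P : params) (u n1 n2 : R) (rho : M4) : M4 :=
  (- 'i) *: comm (Hc P u n1 n2) rho + ((eps P)%:C) *: LD P n1 n2 rho.
Definition adjoint_rhs (P : params) (u n1 n2 : R) (chi : M4) : M4 :=
  (- 'i) *: comm (Hc P u n1 n2) chi - ((eps P)%:C) *: LDadj P n1 n2 chi.

(* switching functions (the real numbers <chi, .>; real for Hermitian
   arguments, we take the real part) *)
Definition Ku (P : params) (chi rho : M4) : R :=
  complex.Re (ip chi ((- 'i) *: comm (Vop P) rho)).
Definition Kn1 (P : params) (chi rho : M4) : R :=
  complex.Re (ip chi ((- 'i * (eps P * La1 P)%:C) *: comm W1 rho
     + ((eps P * Om1 P)%:C) *: (2%:R *: (sig1m *m rho *m sig1p)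
                               + 2%:R *: (sig1p *m rho *m sig1m)
                               - 2%:R *: rho))).
Definition Kn2 (P : params) (chi rho : M4) : R :=
  complex.Re (ip chi ((- 'i * (eps P * La2 P)%:C) *: comm W2 rho
     + ((eps P * Om2 P)%:C) *: (2%:R *: (sig2m *m rho *m sig2p)
                               + 2%:R *: (sig2p *m rho *m sig2m)
                               - 2%:R *: rho))).

Definition piecewise_continuous (T : R) (f : R -> R) : Prop :=
  exists s : seq R,
    (forall t, 0 < t < T -> t \notin s -> {for t, continuous f}) /\
    (forall t, 0 < t <= T -> [cvg f @ t^'- in R]) /\
    (forall t, 0 <= t < T -> [cvg f @ t^'+ in R]).

Definition admissible (T mu nmax : R) (u n1 n2 : R -> R) : Prop :=
  [/\ piecewise_continuous T u, piecewise_continuous T n1,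
      piecewise_continuous T n2 &
      forall t, 0 <= t <= T ->
        [/\ -mu <= u t <= mu, 0 <= n1 t <= nmax & 0 <= n2 t <= nmax]].

(* X : R -> M4 solves X' = G(t) on [0,T] (entrywise, real and imaginary
   parts): X is continuous on [0,T] and differentiable with X'(t) = G t at
   every t in ]0,T[ except finitely many (the switching times). *)
Definition solves_on (T : R) (G : R -> M4) (X : R -> M4) : Prop :=
  (forall i j : 'I_4,
     {within `[0, T], continuous (fun t => complex.Re (X t i j))} /\
     {within `[0, T], continuous (fun t => complex.Im (X t i j))}) /\
  exists s : seq R, forall t, 0 < t < T -> t \notin s ->
    forall i j : 'I_4,
      is_derive t 1 (fun x => complex.Re (X x i j)) (complex.Re (G t i j)) /\
      is_derive t 1 (fun x => complex.Im (X x i j)) (complex.Im (G t i j)).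

Definition master_sol (P : params) (T : R) (u n1 n2 : R -> R)
  (rho0 : M4) (rho : R -> M4) : Prop :=
  rho 0 = rho0 /\
  solves_on T (fun t => master_rhs P (u t) (n1 t) (n2 t) (rho t)) rho.

Definition adjoint_sol (P : params) (T : R) (u n1 n2 : R -> R)
  (target : M4) (chi : R -> M4) : Prop :=
  chi T = target /\
  solves_on T (fun t => adjoint_rhs P (u t) (n1 t) (n2 t) (chi t)) chi.

(* objective J_1 = Tr(rho(T) rho_target), for the solution rho of the
   master equation (real, we take the real part) *)
Definition J1 (T : R) (target : M4) (rho : R -> M4) : R :=
  complex.Re (\tr (rho T *m target)).

Definition is_argmax (lo hi : R) (g : R -> R) (x : R) : Prop :=
  lo <= x <= hi /\ forall y, lo <= y <= hi -> g y <= g x.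

Definition pos_lebesgue (A : set R) : Prop := (0 < lebesgue_measure A)%E.

End QuantumControl.

(* Main.v *)
Require Import Defs.
From HB Require Import structures.
From mathcomp Require Import all_boot all_order all_algebra.
From mathcomp Require Import all_classical all_reals all_analysis.
From mathcomp Require Import complex.
From mathcomp Require Import ring lra.
Import Order.TTheory GRing.Theory Num.Theory.
Import numFieldNormedType.Exports.
Local Open Scope classical_set_scope.
Local Open Scope ring_scope.

Section Alg.
Variable R : realType.
Local Notation C := R[i].
Local Notation M4 := 'M[C]_4.
Implicit Types A B X Y : M4.

Lemma conj_real (x : R) : Num.conj (x%:C)%C = (x%:C)%C.
Proof. exact: conjc_real. Qed.

Lemma conj_mi : Num.conj (- 'i%C : C) = 'i%C.
Proof. rewrite rmorphN; change (- (0 -i* 1) = (0 +i* 1) :> C)%C; apply/eqP; rewrite eq_complex /= oppr0 opprK !eqxx. done. Qed.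

Lemma dagD A B : dag (A + B) = dag A + dag B.
Proof. by rewrite /dag linearD /= map_mxD. Qed.
Lemma dagN A : dag (- A) = - dag A.
Proof. by rewrite /dag linearN /= map_mxN. Qed.
Lemma dagB A B : dag (A - B) = dag A - dag B.
Proof. by rewrite dagD dagN. Qed.
Lemma dagZ (c : C) A : dag (c *: A) = Num.conj c *: dag A.
Proof. by rewrite /dag linearZ /= map_mxZ. Qed.
Lemma dagM A B : dag (A *m B) = dag B *m dag A.
Proof. by rewrite /dag trmx_mul map_mxM. Qed.
Lemma dagK A : dag (dag A) = A.
Proof. by apply/matrixP => i j; rewrite !mxE conjCK. Qed.

Lemma ipDl A B X : ip (A + B) X = ip A X + ip B X.
Proof. by rewrite /ip dagD mulmxDl mxtraceD. Qed.
Lemma ipDr A B X : ip X (A + B) = ip X A + ip X B.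
Proof. by rewrite /ip mulmxDr mxtraceD. Qed.
Lemma ipNl A X : ip (- A) X = - ip A X.
Proof. by rewrite /ip dagN mulNmx linearN. Qed.
Lemma ipNr A X : ip X (- A) = - ip X A.
Proof. by rewrite /ip mulmxN linearN. Qed.
Lemma ipBl A B X : ip (A - B) X = ip A X - ip B X.
Proof. by rewrite ipDl ipNl. Qed.
Lemma ipBr A B X : ip X (A - B) = ip X A - ip X B.
Proof. by rewrite ipDr ipNr. Qed.
Lemma ipZl (c : C) A X : ip (c *: A) X = Num.conj c * ip A X.
Proof. by rewrite /ip dagZ -scalemxAl mxtraceZ. Qed.
Lemma ipZr (c : C) A X : ip X (c *: A) = c * ip X A.
Proof. by rewrite /ip -scalemxAr mxtraceZ. Qed.
Lemma ipMl Y A X : ip (Y *m A) X = ip A (dag Y *m X).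
Proof. by rewrite /ip dagM mulmxA. Qed.
Lemma ipMr Y A X : ip (A *m Y) X = ip A (X *m dag Y).
Proof. by rewrite /ip dagM -mulmxA mxtrace_mulC mulmxA. Qed.

Lemma inord_eqE (a b : nat) : (a < 2)%N -> (b < 2)%N ->
  ((inord a : 'I_2) == inord b) = (a == b).
Proof. by move=> ha hb; rewrite -(inj_eq val_inj) /= !inordK. Qed.

Ltac crunch :=
  apply/matrixP; do 2 (case=> [[|[|[|[|//]]]] ?]);
  rewrite !mxE ?big_ord_recr ?big_ord0 /= ?mxE /= ?inordK //= ?inord_eqE //= ?eqxx /=
    ?mul1r ?mulr0 ?mul0r ?mulr1 ?add0r ?addr0 ?conjC0 ?conjC1 ?rmorphN1 //.

Lemma dag_sig1p : dag (sig1p R) = sig1m R.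
Proof. rewrite /dag /sig1p /sig1m /kron. crunch. Qed.
Lemma dag_sig2p : dag (sig2p R) = sig2m R.
Proof. rewrite /dag /sig2p /sig2m /kron. crunch. Qed.
Lemma dag_sig1m : dag (sig1m R) = sig1p R.
Proof. by rewrite -dag_sig1p dagK. Qed.
Lemma dag_sig2m : dag (sig2m R) = sig2p R.
Proof. by rewrite -dag_sig2p dagK. Qed.
Lemma dag_W1 : dag (W1 R) = W1 R.
Proof. rewrite /dag /W1 /kron. crunch. Qed.
Lemma dag_W2 : dag (W2 R) = W2 R.
Proof. rewrite /dag /W2 /kron. crunch. Qed.
Lemma sig1_sum : sig1p R *m sig1m R + sig1m R *m sig1p R = 1.
Proof. rewrite /sig1p /sig1m /kron. crunch. Qed.
Lemma sig2_sum : sig2p R *m sig2m R + sig2m R *m sig2p R = 1.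
Proof. rewrite /sig2p /sig2m /kron. crunch. Qed.

End Alg.

Section Alg3.
Variable R : realType.
Local Notation C := R[i].
Local Notation M4 := 'M[C]_4.
Lemma conj_2 : Num.conj (2%:R : C) = 2%:R.
Proof. by rewrite rmorph_nat. Qed.
Lemma ipS (X A Y B : M4) : ip (X *m A *m Y) B = ip A (dag X *m B *m dag Y).
Proof. by rewrite ipMr ipMl mulmxA. Qed.
Lemma ipAc (S A B : M4) : ip (acomm S A) B = ip A (acomm (dag S) B).
Proof. by rewrite /acomm ipDl ipDr ipMl ipMr. Qed.
Lemma term_adj (a : R) (p m X Y : M4) : dag p = m ->
  ip ((a%:C)%C *: (2%:R *: (p *m X *m m) - acomm (p *m m) X)) Y =
  ip X ((a%:C)%C *: (2%:R *: (m *m Y *m p) - acomm (p *m m) Y)).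
Proof.
move=> h; have h' : dag m = p by rewrite -h dagK.
rewrite ipZl ipZr conj_real.
rewrite ipBl ipBr.
rewrite [ip (_ *: _) Y]ipZl [ip X (_ *: _)]ipZr conj_2.
rewrite ipS ipAc dagM h h'.
done.
Qed.
Lemma commDl (A B X : M4) : comm (A + B) X = comm A X + comm B X.
Proof. rewrite /comm mulmxDl mulmxDr opprD !addrA; congr (_ + _);
  rewrite -!addrA; congr (_ + _); by rewrite addrC. Qed.
Lemma commZl (c : C) (A X : M4) : comm (c *: A) X = c *: comm A X.
Proof. by rewrite /comm -scalemxAl -scalemxAr scalerBr. Qed.
Lemma acomm_swap (p m Y : M4) : p *m m + m *m p = 1 ->
  acomm (m *m p) Y = 2%:R *: Y - acomm (p *m m) Y.
Proof.
move=> h; apply/eqP; rewrite eq_sym subr_eq /acomm.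
rewrite addrACA -mulmxDl -mulmxDr [m *m p + _]addrC h mul1mx mulmx1.
by rewrite scaler_nat mulr2n.
Qed.

Lemma lin_master (V : lmodType C) (f : V -> C)
  (fD : forall a b, f (a + b) = f a + f b) (fZ : forall c a, f (c *: a) = c * f a)
  (eps La1 La2 Om1 Om2 u n1 n2 : R) (cH c1 c2 cV a1 b1 a2 b2 q1 q2 Y : V) :
  f ((- 'i%C) *: (cH + ((eps * La1 * n1)%:C)%C *: c1
                         + ((eps * La2 * n2)%:C)%C *: c2 + (u%:C)%C *: cV)
     + (eps%:C)%C *: (
         ((Om1 * (n1 + 1))%:C)%C *: (2%:R *: a1 - q1)
       + ((Om1 * n1)%:C)%C *: (2%:R *: b1 - (2%:R *: Y - q1))
       + ((Om2 * (n2 + 1))%:C)%C *: (2%:R *: a2 - q2)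
       + ((Om2 * n2)%:C)%C *: (2%:R *: b2 - (2%:R *: Y - q2)))) =
  f ((- 'i%C) *: cH)
  + (eps%:C)%C * ((Om1%:C)%C * f (2%:R *: a1 - q1)
                + (Om2%:C)%C * f (2%:R *: a2 - q2))
  + (u%:C)%C * f ((- 'i%C) *: cV)
  + (n1%:C)%C * f ((- 'i%C * ((eps * La1)%:C)%C) *: c1
     + ((eps * Om1)%:C)%C *: (2%:R *: a1 + 2%:R *: b1 - 2%:R *: Y))
  + (n2%:C)%C * f ((- 'i%C * ((eps * La2)%:C)%C) *: c2
     + ((eps * Om2)%:C)%C *: (2%:R *: a2 + 2%:R *: b2 - 2%:R *: Y)).
Proof.
have fN a : f (- a) = - f a by rewrite -scaleN1r fZ mulN1r.
rewrite !(fD, fN, fZ).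
rewrite !(rmorphM, rmorphD, rmorph1).
ring.
Qed.

Lemma ip_master_gen (eps La1 La2 Om1 Om2 u n1 n2 : R)
  (H0 W1 W2 V p1 m1 p2 m2 X Y : M4) :
  p1 *m m1 + m1 *m p1 = 1 -> p2 *m m2 + m2 *m p2 = 1 ->
  ip X ((- 'i%C) *: comm (H0 + ((eps * La1 * n1)%:C)%C *: W1
                         + ((eps * La2 * n2)%:C)%C *: W2 + (u%:C)%C *: V) Y
     + (eps%:C)%C *: (
         ((Om1 * (n1 + 1))%:C)%C *: (2%:R *: (m1 *m Y *m p1) - acomm (p1 *m m1) Y)
       + ((Om1 * n1)%:C)%C *: (2%:R *: (p1 *m Y *m m1) - acomm (m1 *m p1) Y)
       + ((Om2 * (n2 + 1))%:C)%C *: (2%:R *: (m2 *m Y *m p2) - acomm (p2 *m m2) Y)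
       + ((Om2 * n2)%:C)%C *: (2%:R *: (p2 *m Y *m m2) - acomm (m2 *m p2) Y))) =
  ip X ((- 'i%C) *: comm H0 Y)
  + (eps%:C)%C * ((Om1%:C)%C * ip X (2%:R *: (m1 *m Y *m p1) - acomm (p1 *m m1) Y)
                + (Om2%:C)%C * ip X (2%:R *: (m2 *m Y *m p2) - acomm (p2 *m m2) Y))
  + (u%:C)%C * ip X ((- 'i%C) *: comm V Y)
  + (n1%:C)%C * ip X ((- 'i%C * ((eps * La1)%:C)%C) *: comm W1 Y
     + ((eps * Om1)%:C)%C *: (2%:R *: (m1 *m Y *m p1)
                               + 2%:R *: (p1 *m Y *m m1)
                               - 2%:R *: Y))
  + (n2%:C)%C * ip X ((- 'i%C * ((eps * La2)%:C)%C) *: comm W2 Y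
     + ((eps * Om2)%:C)%C *: (2%:R *: (m2 *m Y *m p2)
                               + 2%:R *: (p2 *m Y *m m2)
                               - 2%:R *: Y)).
Proof.
move=> h1 h2.
rewrite (@acomm_swap p1 m1 Y h1) (@acomm_swap p2 m2 Y h2).
rewrite !commDl !commZl.
move: (comm H0 Y) (comm W1 Y) (comm W2 Y) (comm V Y) (m1 *m Y *m p1)
  (p1 *m Y *m m1) (m2 *m Y *m p2) (p2 *m Y *m m2) (acomm (p1 *m m1) Y)
  (acomm (p2 *m m2) Y) => cH c1 c2 cV a1 b1 a2 b2 q1 q2.
exact: (@lin_master _ (ip X) (fun a b => @ipDr R a b X) (fun c a => @ipZr R c a X)).
Qed.

Lemma ip_LD (P : params R) (n1 n2 : R) (X Y : M4) :
  ip (LDadj P n1 n2 X) Y = ip X (LD P n1 n2 Y).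
Proof.
rewrite /LDadj /LD.
do 3 rewrite ipDl. do 3 rewrite ipDr.
congr (_ + _ + _ + _); apply: term_adj;
  by [exact: dag_sig1p|exact: dag_sig1m|exact: dag_sig2p|exact: dag_sig2m].
Qed.

Lemma dag_Hc (P : params R) (u n1 n2 : R) : Defs.hermitian (Vop P) ->
  dag (Hc P u n1 n2) = Hc P u n1 n2.
Proof.
move=> hV; rewrite /Hc /H0 !dagD !dagZ !conj_real dag_W1 dag_W2.
by rewrite /Defs.hermitian in hV; rewrite hV.
Qed.

Lemma ip_comm (H X Y : M4) : dag H = H ->
  ip ((- 'i%C) *: comm H X) Y + ip X ((- 'i%C) *: comm H Y) = 0.
Proof.
move=> hH; rewrite /comm ipZl ipZr ipBl ipBr ipMl ipMr hH conj_mi.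
ring.
Qed.

Lemma ip_adj (P : params R) (u n1 n2 : R) (X Y : M4) : Defs.hermitian (Vop P) ->
  ip (adjoint_rhs P u n1 n2 X) Y + ip X (master_rhs P u n1 n2 Y) = 0.
Proof.
move=> hV; have hc := @ip_comm _ X Y (dag_Hc P u n1 n2 hV).
rewrite /adjoint_rhs /master_rhs ipBl ipDr.
rewrite [ip (_ *: LDadj _ _ _ _) _]ipZl [ip _ (_ *: LD _ _ _ _)]ipZr conj_real ip_LD.
move: hc.
move: (ip ((- 'i%C) *: comm (Hc P u n1 n2) X) Y) (ip X ((- 'i%C) *: comm (Hc P u n1 n2) Y))
  (ip X (LD P n1 n2 Y)) => a b c h.
by rewrite addrACA h add0r -mulNr -mulrDl addNr mul0r.
Qed.

Lemma ip_master (P : params R) (u n1 n2 : R) (X Y : M4) :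
  ip X (master_rhs P u n1 n2 Y) =
  ip X ((- 'i%C) *: comm (H0 P) Y)
  + ((eps P)%:C)%C * (((Om1 P)%:C)%C * ip X (2%:R *: (sig1m R *m Y *m sig1p R) - acomm (sig1p R *m sig1m R) Y)
                + ((Om2 P)%:C)%C * ip X (2%:R *: (sig2m R *m Y *m sig2p R) - acomm (sig2p R *m sig2m R) Y))
  + (u%:C)%C * ip X ((- 'i%C) *: comm (Vop P) Y)
  + (n1%:C)%C * ip X ((- 'i%C * ((eps P * La1 P)%:C)%C) *: comm (W1 R) Y
     + ((eps P * Om1 P)%:C)%C *: (2%:R *: (sig1m R *m Y *m sig1p R)
                               + 2%:R *: (sig1p R *m Y *m sig1m R)
                               - 2%:R *: Y))
  + (n2%:C)%C * ip X ((- 'i%C * ((eps P * La2 P)%:C)%C) *: comm (W2 R) Y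
     + ((eps P * Om2 P)%:C)%C *: (2%:R *: (sig2m R *m Y *m sig2p R)
                               + 2%:R *: (sig2p R *m Y *m sig2m R)
                               - 2%:R *: Y)).
Proof.
rewrite /master_rhs /Hc /LD.
by apply: ip_master_gen; [exact: sig1_sum | exact: sig2_sum].
Qed.

Lemma ReD (a b : C) : complex.Re (a + b) = complex.Re a + complex.Re b.
Proof. by case: a => ? ?; case: b. Qed.

Lemma re_gen (z0 za zb zV z1 z2 : C) (e o1 o2 u n1 n2 u' n1' n2' : R) :
  complex.Re (z0 + (e%:C)%C * ((o1%:C)%C * za + (o2%:C)%C * zb) + (u'%:C)%C * zV
     + (n1'%:C)%C * z1 + (n2'%:C)%C * z2)
  - complex.Re (z0 + (e%:C)%C * ((o1%:C)%C * za + (o2%:C)%C * zb) + (u%:C)%C * zV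
     + (n1%:C)%C * z1 + (n2%:C)%C * z2)
  = complex.Re zV * (u' - u) + complex.Re z1 * (n1' - n1) + complex.Re z2 * (n2' - n2).
Proof.
case: z0 => ? ?; case: za => ? ?; case: zb => ? ?; case: zV => ? ?;
case: z1 => ? ?; case: z2 => ? ? /=.
ring.
Qed.

Lemma K_diff (P : params R) (u n1 n2 u' n1' n2' : R) (X Y : M4) :
  complex.Re (ip X (master_rhs P u' n1' n2' Y))
  - complex.Re (ip X (master_rhs P u n1 n2 Y))
  = Ku P X Y * (u' - u) + Kn1 P X Y * (n1' - n1) + Kn2 P X Y * (n2' - n2).
Proof.
rewrite !ip_master /Ku /Kn1 /Kn2.
exact: re_gen.
Qed.

End Alg3.

Section An.
Variable R : realType.
Local Notation C := R[i].
Local Notation M4 := 'M[C]_4.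


Lemma Re_sum (I : Type) (r : seq I) (P : pred I) (F : I -> C) :
  complex.Re (\sum_(i <- r | P i) F i) = \sum_(i <- r | P i) complex.Re (F i).
Proof. by elim/big_rec2: _ => //= i x y _ <-; rewrite ReD. Qed.

Definition rip (A B : M4) : R := \sum_(i < 4) \sum_(k < 4)
  (complex.Re (A k i) * complex.Re (B k i) + complex.Im (A k i) * complex.Im (B k i)).

Lemma Re_ip (A B : M4) : complex.Re (ip A B) = rip A B.
Proof.
rewrite /ip /mxtrace Re_sum; apply: eq_bigr => i _.
rewrite mxE Re_sum; apply: eq_bigr => k _; rewrite /dag !mxE.
case: (A k i) => a b; case: (B k i) => c d /=.
ring.
Qed.

Lemma is_derive_big n (h : 'I_n -> R -> R) (dh : 'I_n -> R) (t : R) :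
  (forall i, is_derive t 1 (h i) (dh i)) ->
  is_derive t 1 (fun x => \sum_(i < n) h i x) (\sum_(i < n) dh i).
Proof. by move=> hd; rewrite -fct_sumE; exact: is_derive_sum. Qed.

Lemma cont_big (T : topologicalType) n (h : 'I_n -> T -> R) x :
  (forall i, {for x, continuous (h i)}) ->
  {for x, continuous (fun y => \sum_(i < n) h i y)}.
Proof.
move=> hc; rewrite -fct_sumE; elim/big_ind: _ => //.
- exact: cvg_cst.
- by move=> f g cf cg; apply: continuousD.
Qed.

Definition dsolves (t : R) (X : R -> M4) (dX : M4) :=
  forall i j : 'I_4,
      is_derive t 1 (fun x => complex.Re (X x i j)) (complex.Re (dX i j)) /\
      is_derive t 1 (fun x => complex.Im (X x i j)) (complex.Im (dX i j)).

Lemma is_derive_ip (X Y : R -> M4) (dX dY : M4) (t : R) :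
  dsolves t X dX -> dsolves t Y dY ->
  is_derive t 1 (fun x => complex.Re (ip (X x) (Y x)))
     (complex.Re (ip dX (Y t)) + complex.Re (ip (X t) dY)).
Proof.
move=> hX hY.
have -> : (fun x => complex.Re (ip (X x) (Y x))) = (fun x => rip (X x) (Y x)).
  by apply/funext => x; rewrite Re_ip.
rewrite !Re_ip /rip -big_split /=.
apply: is_derive_big => i; rewrite -big_split /=.
apply: is_derive_big => k.
have [hXr hXi] := hX k i; have [hYr hYi] := hY k i.
have H := is_deriveD (is_deriveM hXr hYr) (is_deriveM hXi hYi).
set fr := (fun x => complex.Re (X x k i)); set gr := (fun x => complex.Re (Y x k i)).
set fi := (fun x => complex.Im (X x k i)); set gi := (fun x => complex.Im (Y x k i)).
match type of H with is_derive _ _ ?F _ =>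
  have -> : (fun x => fr x * gr x + fi x * gi x) = F by apply/funext end.
apply: (is_derive_eq H).

rewrite /GRing.scale /=; ring.
Qed.

Definition wcont (A : set R) (X : R -> M4) :=
  forall i j : 'I_4,
     {within A, continuous (fun t => complex.Re (X t i j))} /\
     {within A, continuous (fun t => complex.Im (X t i j))}.

Lemma cont_ip (A : set R) (X Y : R -> M4) :
  wcont A X -> wcont A Y ->
  {within A, continuous (fun x => complex.Re (ip (X x) (Y x)))}.
Proof.
move=> hX hY.
have -> : (fun x => complex.Re (ip (X x) (Y x))) = (fun x => rip (X x) (Y x)).
  by apply/funext => x; rewrite Re_ip.
move=> x; rewrite /rip.
apply: cont_big => i; apply: cont_big => k.
have [hXr hXi] := hX k i; have [hYr hYi] := hY k i.
apply: continuousD; apply: continuousM; by [apply: hXr|apply: hYr|apply: hXi|apply: hYi].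
Qed.

End An.

Section Mono.
Variable R : realType.

Lemma sub_cc (a b c d : R) : a <= c -> d <= b -> `[c, d] `<=` `[a, b].
Proof.
move=> h1 h2 y /=; rewrite !in_itv /= => /andP[h3 h4].
by apply/andP; split; [exact: le_trans h1 h3|exact: le_trans h4 h2].
Qed.

Lemma mono_fin (f df : R -> R) (s : seq R) (a b : R) : a <= b ->
  {within `[a, b], continuous f} ->
  (forall t, a < t < b -> t \notin s -> is_derive t 1 f (df t) /\ 0 <= df t) ->
  f a <= f b.
Proof.
elim: s a b => [|x s IH] a b hab hc hd.
  move: hab; rewrite le_eqVlt => /orP[/eqP ->//|hlt].
  have [c hcab e] : exists2 c, c \in `]a, b[ & f b - f a = df c * (b - a).
    apply: MVT => // y; rewrite in_itv /= => hy.
    by have [] := hd y hy.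
  move: hcab; rewrite in_itv /= => hcab.
  have [_ h0] := hd c hcab isT.
  by rewrite -subr_ge0 e; apply: mulr_ge0 => //; rewrite subr_ge0 ltW.
have [hx|hx] := boolP (a < x < b).
  have /andP[hax hxb] := hx.
  apply: (@le_trans _ _ (f x)).
    apply: IH; first exact: ltW.
      by apply: continuous_subspaceW hc; apply: sub_cc => //; exact: ltW.
    move=> t /andP[ht1 ht2] hts; apply: hd.
      by apply/andP; split => //; exact: lt_trans ht2 hxb.
    by rewrite in_cons negb_or hts andbT; apply/eqP => htx; move: ht2; rewrite htx ltxx.
  apply: IH; first exact: ltW.
    by apply: continuous_subspaceW hc; apply: sub_cc => //; exact: ltW.
  move=> t /andP[ht1 ht2] hts; apply: hd.
    by apply/andP; split => //; exact: lt_trans hax ht1.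
  by rewrite in_cons negb_or hts andbT; apply/eqP => htx; move: ht1; rewrite htx ltxx.
apply: IH => // t ht hts; apply: hd => //.
rewrite in_cons negb_or hts andbT; apply/eqP => htx; move: hx; rewrite -htx ht.
done.
Qed.

Lemma deriv_zero_const (f : R -> R) (c d t0 a b : R) : a < t0 < b ->
  (forall x, a < x < b -> f x = c) -> is_derive t0 1 f d -> d = 0.
Proof.
move=> ht hf hd.
have hn : \forall z \near t0, f z = cst c z.
  have := @near_in_itvoo R a b t0; rewrite in_itv /= => /(_ ht).
  by apply: filterS => z; rewrite in_itv /= => /hf.
have := near_eq_is_derive hn hd.
move=> hd'; by rewrite -(@derive_val _ _ _ _ _ _ _ hd') derive_cst.
Qed.
End Mono.

Section Herm.
Variable R : realType.
Local Notation C := R[i].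
Local Notation M4 := 'M[C]_4.

Lemma dcv_delta (j : 'I_4) : dag_cv (delta_mx j 0 : 'cV[C]_4) = delta_mx 0 j.
Proof. by rewrite /dag_cv trmx_delta map_delta_mx. Qed.

Lemma qentry (A : M4) (j k : 'I_4) :
  ((delta_mx 0 j : 'rV[C]_4) *m A *m (delta_mx k 0 : 'cV[C]_4)) 0 0 = A j k.
Proof. by rewrite -rowE -colE !mxE. Qed.

Lemma qform (A : M4) (j k : 'I_4) (c : C) :
  (dag_cv (delta_mx j 0 + c *: delta_mx k 0 : 'cV[C]_4) *m A *m (delta_mx j 0 + c *: delta_mx k 0 : 'cV[C]_4)) 0 0
  = A j j + c * A j k + Num.conj c * A k j + Num.conj c * c * A k k.
Proof.
have dD (x y : 'cV[C]_4) : dag_cv (x + y) = dag_cv x + dag_cv y.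
  by apply/matrixP => a b; rewrite !mxE rmorphD.
have dZ (e : C) (x : 'cV[C]_4) : dag_cv (e *: x) = Num.conj e *: dag_cv x.
  by apply/matrixP => a b; rewrite !mxE rmorphM.
rewrite dD dZ !dcv_delta.
rewrite !(mulmxDl, mulmxDr) -!scalemxAl -!scalemxAr.
have eA (M N : 'M[C]_1) : (M + N) 0 0 = M 0 0 + N 0 0 by rewrite mxE.
have eZ (e : C) (M : 'M[C]_1) : (e *: M) 0 0 = e * M 0 0 by rewrite mxE.
rewrite !eA !eZ !qentry.
ring.
Qed.

Lemma density_herm (A : M4) : density A -> dag A = A.
Proof.
move=> [hp _].
have hIm x : complex.Im ((dag_cv x *m A *m x) 0 0) = 0.
  by have := hp x; rewrite lecE /= => /andP[/eqP <- _].
have hd j : complex.Im (A j j) = 0.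
  have := hIm (delta_mx j 0 + 0 *: delta_mx j 0); rewrite qform.
  by rewrite rmorph0 !mul0r !addr0.
apply/matrixP => j k; rewrite /dag !mxE.
have h1 := hIm (delta_mx j 0 + 1 *: delta_mx k 0); rewrite qform rmorph1 !mul1r in h1.
have h2 := hIm (delta_mx j 0 + 'i%C *: delta_mx k 0); rewrite qform in h2.
have hj := hd j; have hk := hd k.
move: h1 h2 hj hk; case: (A j j) => a1 b1; case: (A j k) => a2 b2;
  case: (A k j) => a3 b3; case: (A k k) => a4 b4 /= h1 h2 hj hk.
change ((conjc (a3 +i* b3))%C = (a2 +i* b2)%C); rewrite /=.
rewrite hj hk in h1 h2.
apply/eqP; rewrite eq_complex /=; apply/andP; split; apply/eqP; lra.
Qed.
End Herm.

Section Main.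
Variable R : realType.
Local Notation C := R[i].
Local Notation M4 := 'M[C]_4.

Lemma argmax_term (K x y lo hi : R) : is_argmax lo hi (fun v => K * v) x ->
  lo <= y <= hi -> 0 <= K * (x - y) /\ (x != y -> K != 0 -> 0 < K * (x - y)).
Proof.
move=> [_ hm] hy; have h := hm y hy.
have h0 : 0 <= K * (x - y) by rewrite mulrBr subr_ge0.
split => // hxy hK; rewrite lt_def h0 andbT mulf_neq0 //.
by rewrite subr_eq0.
Qed.

Lemma null_sub (A : set R) (s : seq R) : A `<=` [set` s] -> ~ pos_lebesgue A.
Proof.
move=> hA; rewrite /pos_lebesgue countable_lebesgue_measure0 ?ltxx //.
apply: (sub_countable (subset_card_le hA)).
exact/finite_set_countable/finite_seq.
Qed.

Lemma J1_ip (T : R) (target : M4) (rho : R -> M4) : density target ->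
  J1 T target rho = complex.Re (ip target (rho T)).
Proof.
move=> hd; rewrite /J1 /ip density_herm // mxtrace_mulC //.
Qed.

End Main.
Arguments argmax_term {R K x y lo hi}.
Arguments null_sub {R A s}.
Arguments is_derive_ip {R X Y dX dY t}.
Arguments ip_adj {R P}.
Arguments deriv_zero_const {R f c d t0 a b}.

Theorem proposition1 (R : realType) (P : params R) (T mu nmax : R)
  (rho0 rhotarget : 'M[R[i]]_4)
  (uk n1k n2k uk1 n1k1 n2k1 : R -> R)
  (rhok chik rhok1 : R -> 'M[R[i]]_4) :
  params_ok P -> 0 < T -> 0 < mu -> 0 < nmax ->
  density rho0 -> density rhotarget ->
  admissible T mu nmax uk n1k n2k ->
  master_sol P T uk n1k n2k rho0 rhok ->
  adjoint_sol P T uk n1k n2k rhotarget chik ->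
  admissible T mu nmax uk1 n1k1 n2k1 ->
  master_sol P T uk1 n1k1 n2k1 rho0 rhok1 ->
  (forall t, 0 <= t <= T ->
     [/\ is_argmax (- mu) mu (fun v => Ku P (chik t) (rhok1 t) * v) (uk1 t),
         is_argmax 0 nmax (fun v => Kn1 P (chik t) (rhok1 t) * v) (n1k1 t) &
         is_argmax 0 nmax (fun v => Kn2 P (chik t) (rhok1 t) * v) (n2k1 t)]) ->
  [/\ (forall t, 0 <= t <= T ->
         0 <= Ku P (chik t) (rhok1 t) * (uk1 t - uk t)
              + Kn1 P (chik t) (rhok1 t) * (n1k1 t - n1k t)
              + Kn2 P (chik t) (rhok1 t) * (n2k1 t - n2k t)),
      J1 T rhotarget rhok <= J1 T rhotarget rhok1 &
      (pos_lebesgue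
              [set t | 0 <= t <= T /\ uk1 t != uk t /\
                       Ku P (chik t) (rhok1 t) != 0] \/
       pos_lebesgue
              [set t | 0 <= t <= T /\ n1k1 t != n1k t /\
                       Kn1 P (chik t) (rhok1 t) != 0] \/
       pos_lebesgue
              [set t | 0 <= t <= T /\ n2k1 t != n2k t /\
                       Kn2 P (chik t) (rhok1 t) != 0]) ->
      J1 T rhotarget rhok < J1 T rhotarget rhok1].
Proof.
move=> [_ [_ _ hV]] hT _ _ _ hdt [_ _ _ hadm] [hk0 [hkc [sk hkd]]]
  [hcT [hcc [sc hcd]]] _ [h10 [h1c [s1 h1d]]] harg.
set g := fun t => Ku P (chik t) (rhok1 t) * (uk1 t - uk t)
              + Kn1 P (chik t) (rhok1 t) * (n1k1 t - n1k t)
              + Kn2 P (chik t) (rhok1 t) * (n2k1 t - n2k t).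
have hterms t : 0 <= t <= T ->
  [/\ 0 <= Ku P (chik t) (rhok1 t) * (uk1 t - uk t)
     /\ (uk1 t != uk t -> Ku P (chik t) (rhok1 t) != 0 ->
          0 < Ku P (chik t) (rhok1 t) * (uk1 t - uk t)),
      0 <= Kn1 P (chik t) (rhok1 t) * (n1k1 t - n1k t)
     /\ (n1k1 t != n1k t -> Kn1 P (chik t) (rhok1 t) != 0 ->
          0 < Kn1 P (chik t) (rhok1 t) * (n1k1 t - n1k t)) &
      0 <= Kn2 P (chik t) (rhok1 t) * (n2k1 t - n2k t)
     /\ (n2k1 t != n2k t -> Kn2 P (chik t) (rhok1 t) != 0 ->
          0 < Kn2 P (chik t) (rhok1 t) * (n2k1 t - n2k t))].
  move=> ht; have [a1 a2 a3] := harg t ht; have [b1 b2 b3] := hadm t ht.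
  by split; [exact: (argmax_term a1 b1) | exact: (argmax_term a2 b2) | exact: (argmax_term a3 b3)].
have hg0 t : 0 <= t <= T -> 0 <= g t.
  move=> ht; have [[h1 _] [h2 _] [h3 _]] := hterms t ht.
  by rewrite /g; apply: addr_ge0 => //; apply: addr_ge0.
set F := fun t => complex.Re (ip (chik t) (rhok1 t)).
set G := fun t => complex.Re (ip (chik t) (rhok t)).
have hFc : {within `[0, T], continuous F} by apply: cont_ip.
have hGc : {within `[0, T], continuous G} by apply: cont_ip.
have hFd t : 0 < t < T -> t \notin sc ++ s1 -> is_derive t 1 F (g t).
  move=> ht hts; rewrite mem_cat negb_or in hts; have /andP[hts1 hts2] := hts.
  have := is_derive_ip (hcd t ht hts1) (h1d t ht hts2).
  rewrite -/F => hd; apply: (is_derive_eq hd).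
  have e := ip_adj (uk t) (n1k t) (n2k t) (chik t) (rhok1 t) hV.
  have e2 : complex.Re (ip (adjoint_rhs P (uk t) (n1k t) (n2k t) (chik t)) (rhok1 t))
     = - complex.Re (ip (chik t) (master_rhs P (uk t) (n1k t) (n2k t) (rhok1 t))).
    by apply/eqP; rewrite -addr_eq0 -ReD e.
  by rewrite e2 addrC K_diff.
have hGd t : 0 < t < T -> t \notin sc ++ sk -> is_derive t 1 G 0.
  move=> ht hts; rewrite mem_cat negb_or in hts; have /andP[hts1 hts2] := hts.
  have := is_derive_ip (hcd t ht hts1) (hkd t ht hts2).
  rewrite -/G => hd; apply: (is_derive_eq hd).
  by rewrite -ReD ip_adj.
have hF a b : 0 <= a -> a <= b -> b <= T -> F a <= F b.
  move=> ha hab hb; apply: (@mono_fin _ F g (sc ++ s1)) => //.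
    by apply: continuous_subspaceW hFc; apply: sub_cc.
  move=> t /andP[h1 h2] hts; split.
    by apply: hFd => //; apply/andP; split; [exact: le_lt_trans h1|exact: lt_le_trans h2 hb].
  by apply: hg0; apply/andP; split; [exact: ltW (le_lt_trans ha h1)|exact: ltW (lt_le_trans h2 hb)].
have hG : G 0 <= G T.
  apply: (@mono_fin _ G (fun=> 0) (sc ++ sk)) => //; first exact: ltW.
  by move=> t ht hts; split => //; apply: hGd.
have hG' : - G 0 <= - G T -> G T <= G 0 by rewrite lerN2.
have hGN : - G 0 <= - G T.
  apply: (@mono_fin _ (fun t => - G t) (fun=> 0) (sc ++ sk)) => //; first exact: ltW.
    by move=> x; apply: continuousN; exact: hGc.
  move=> t ht hts; split => //; rewrite -oppr0; exact: is_deriveN (hGd t ht hts).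
have hGeq : G T = G 0 by apply/eqP; rewrite eq_le hG' // hG.
have hJk : J1 T rhotarget rhok = F 0.
  by rewrite J1_ip // -hcT; change (G T = F 0); rewrite hGeq /G /F hk0 h10.
have hJk1 : J1 T rhotarget rhok1 = F T by rewrite J1_ip // -hcT.
split.
- by move=> t ht; exact: hg0.
- by rewrite hJk hJk1; apply: hF => //; exact: ltW.
move=> hpos; rewrite hJk hJk1 lt_def hF ?andbT //; last exact: ltW.
apply/negP => /eqP hFT.
have hFc0 t : 0 < t < T -> F t = F 0.
  move=> /andP[h1 h2].
  have h1' : F 0 <= F t := hF 0 t (lexx 0) (ltW h1) (ltW h2).
  have h2' : F t <= F T := hF t T (ltW h1) (ltW h2) (lexx T).
  by apply/eqP; rewrite eq_le h1' andbT -hFT.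
have hg_zero t : 0 < t < T -> t \notin sc ++ s1 -> g t = 0.
  move=> ht hts; exact: (deriv_zero_const ht (fun x hx => hFc0 x hx) (hFd t ht hts)).
have hsub (A : set R) : (forall t, 0 < t < T -> t \notin sc ++ s1 -> A t -> 0 < g t) ->
    (forall t, A t -> 0 <= t <= T) -> A `<=` [set` (0 :: T :: (sc ++ s1))].
  move=> hA hA' t At; rewrite /= !in_cons.
  have /andP[h1 h2] := hA' t At.
  case: (eqVneq t 0) => [->|t0] //=; case: (eqVneq t T) => [->|tT] //=.
  apply/negPn/negP => hts.
  have ht : 0 < t < T by rewrite !lt_def t0 h1 h2 [T == t]eq_sym tT.
  by move: (hA t ht hts At); rewrite hg_zero // ltxx.
have pos3 (a b c : R) : 0 <= a -> 0 <= b -> 0 <= c ->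
    (0 < a \/ 0 < b \/ 0 < c) -> 0 < a + b + c.
  by move=> ha hb hc [h|[h|h]]; lra.
case: hpos => [hp|[hp|hp]]; apply: (null_sub (hsub _ _ _) hp).
- move=> t ht _ [ht' [hne hK]]; have [[a1 a2] [b1 b2] [c1 c2]] := hterms t ht'.
  by apply: pos3 => //; left; exact: a2.
- by move=> t [].
- move=> t ht _ [ht' [hne hK]]; have [[a1 a2] [b1 b2] [c1 c2]] := hterms t ht'.
  by apply: pos3 => //; right; left; exact: b2.
- by move=> t [].
- move=> t ht _ [ht' [hne hK]]; have [[a1 a2] [b1 b2] [c1 c2]] := hterms t ht'.
  by apply: pos3 => //; right; right; exact: c2.
- by move=> t [].
Qed.
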